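(* Let $r,s$ be real numbers with $s, r^2 \in \mathbb{Q}$ and $s \geq 3\sqrt{3}\, r > 0$. Let $C_{r,s}$ be the plane curve $$C_{r,s}\colon\ s(xy - r^2) = x^2 y + x y^2 .$$ Then the assignment $$(x_0,y_0) \mapsto (x_0+y_0,\ s-x_0,\ s-y_0)$$ is a bijection from the set of rational points $(x_0,y_0) \in \mathbb{Q}^2$ on $C_{r,s}$ with $x_0>0$ and $y_0>0$ onto the set of ordered triples $(\ell_1,\ell_2,\ell_3)$ of side lengths of rational Euclidean triangles having semiperimeter $s$ and inradius $r$.
   Context: A Euclidean triangle is called rational if its three side lengths $\ell_1,\ell_2,\ell_3$ are rational numbers. Its semiperimeter is $s=(\ell_1+\ell_2+\ell_3)/2$ and its inradius $r$ is the radius of its inscribed circle. ''Sequences of side lengths'' means ordered triples $(\ell_1,\ell_2,\ell_3)$ of positive reals that are the side lengths of a (nondegenerate) triangle. *)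

(* Defs.v *)
From Stdlib Require Import Reals QArith Qreals.
Open Scope R_scope.

Definition is_rat (x : R) : Prop := exists q : Q, Q2R q = x.

Definition is_triangle (l1 l2 l3 : R) : Prop :=
  0 < l1 /\ 0 < l2 /\ 0 < l3 /\
  l1 < l2 + l3 /\ l2 < l1 + l3 /\ l3 < l1 + l2.

Definition semiperimeter (l1 l2 l3 : R) : R := (l1 + l2 + l3) / 2.

(* Inradius = Area / s, with the area given by Heron's formula,
   i.e. r = sqrt((s-l1)(s-l2)(s-l3)/s). *)
Definition inradius (l1 l2 l3 : R) : R :=
  let s := semiperimeter l1 l2 l3 in
  sqrt ((s - l1) * (s - l2) * (s - l3) / s).

Definition rat_triangle_sr (r s : R) (t : R * R * R) : Prop :=
  let '(l1, l2, l3) := t in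
  is_triangle l1 l2 l3 /\ is_rat l1 /\ is_rat l2 /\ is_rat l3 /\
  semiperimeter l1 l2 l3 = s /\ inradius l1 l2 l3 = r.

Definition pos_rat_point (r s : R) (p : R * R) : Prop :=
  let '(x, y) := p in
  is_rat x /\ is_rat y /\ 0 < x /\ 0 < y /\
  s * (x * y - r ^ 2) = x ^ 2 * y + x * y ^ 2.

Definition curve_map (s : R) (p : R * R) : R * R * R :=
  let '(x, y) := p in (x + y, s - x, s - y).

(* Main.v *)
Require Import Defs.
From Stdlib Require Import Reals QArith Qreals Lra.
Open Scope R_scope.

Lemma rat_add a b : is_rat a -> is_rat b -> is_rat (a + b).
Proof. intros [p <-] [q <-]. exists (p + q)%Q. apply Q2R_plus. Qed.
Lemma rat_sub a b : is_rat a -> is_rat b -> is_rat (a - b).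
Proof. intros [p <-] [q <-]. exists (p - q)%Q. apply Q2R_minus. Qed.

Theorem theorem1 (r s : R)
  (hs : is_rat s) (hr2 : is_rat (r ^ 2))
  (hrpos : 0 < r) (hsr : 3 * sqrt 3 * r <= s) :
  (forall p, pos_rat_point r s p -> rat_triangle_sr r s (curve_map s p)) /\
  (forall p q, pos_rat_point r s p -> pos_rat_point r s q ->
     curve_map s p = curve_map s q -> p = q) /\
  (forall t, rat_triangle_sr r s t ->
     exists p, pos_rat_point r s p /\ curve_map s p = t).
Proof.
  assert (Hs3 : 0 < sqrt 3) by (apply sqrt_lt_R0; lra).
  assert (Hspos : 0 < s) by (assert (0 < 3 * sqrt 3 * r) by (apply Rmult_lt_0_compat; lra); lra).
  split; [|split].
  - intros [x y] (hx & hy & x0 & y0 & hc). simpl.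
    assert (hxy : 0 < x * y) by (apply Rmult_lt_0_compat; lra).
    assert (hk : x * y * (s - x - y) = s * r ^ 2) by nra.
    assert (hsr2 : 0 < s * r ^ 2) by (apply Rmult_lt_0_compat; nra).
    assert (hlt : x + y < s).
    { destruct (Rlt_or_le (x+y) s) as [h|h]; auto.
      assert (x * y * (s - x - y) <= 0); [|lra].
      assert (0 <= x*y*(x+y-s)) by (apply Rmult_le_pos; lra). lra. }
    unfold semiperimeter, inradius.
    assert (Hsp : (x + y + (s - x) + (s - y)) / 2 = s) by field.
    rewrite Hsp.
    split; [unfold is_triangle; lra|].
    split; [now apply rat_add|].
    split; [now apply rat_sub|].
    split; [now apply rat_sub|].
    split; [reflexivity|].
    unfold inradius; cbv zeta; unfold semiperimeter; rewrite Hsp.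
    replace ((s - (x + y)) * (s - (s - x)) * (s - (s - y)) / s) with (r ^ 2)
      by (apply (Rmult_eq_reg_l s); [|lra]; field_simplify; [|lra]; lra).
    apply sqrt_pow2; lra.
  - intros [x y] [x' y'] _ _ h. simpl in h. injection h. intros. f_equal; lra.
  - intros [[l1 l2] l3] (ht & h1 & h2 & h3 & hsp & hin).
    unfold is_triangle in ht. unfold semiperimeter in hsp.
    exists (s - l2, s - l3). split.
    + simpl. split; [now apply rat_sub|]. split; [now apply rat_sub|].
      split; [lra|]. split; [lra|].
      unfold inradius in hin; cbv zeta in hin; unfold semiperimeter in hin; rewrite hsp in hin.
      assert (hpos : 0 <= (s - l1) * (s - l2) * (s - l3) / s).
      { unfold Rdiv. apply Rmult_le_pos; [|left; apply Rinv_0_lt_compat; lra].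
        apply Rmult_le_pos; [apply Rmult_le_pos|]; lra. }
      assert (hr : r ^ 2 = (s - l1) * (s - l2) * (s - l3) / s).
      { rewrite <- hin. simpl. rewrite Rmult_1_r. apply sqrt_sqrt. exact hpos. }
      assert (hk : s * r ^ 2 = (s - l1) * (s - l2) * (s - l3)) by (rewrite hr; field; lra).
      simpl in hk |- *. rewrite Rmult_minus_distr_l, hk.
      replace l1 with (2 * s - l2 - l3) by lra. ring.
    + simpl. f_equal; [f_equal|]; lra.
Qed.
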